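(* Let $p$ be a binary word of length $l\ge1$ with $r$ runs. For every $n\ge 0$, $$B_{n,p}(1)=\binom{n-r+1}{l-r+1}.$$
   Context: Binary words, occurrences, $c_p(w)$ (number of occurrences of $p$ as a subsequence of $w$, i.e. number of index tuples $i_1<\cdots<i_l$ with $w_{i_1}\cdots w_{i_l}=p$) and $B_{n,p}(k)=\#\{w\in\{0,1\}^n: c_p(w)=k\}$. A run of a word is a maximal block of consecutive equal letters; its size is its length. Convention: $\binom{a}{b}=0$ unless $0\le b\le a$. *)

(* Defs.v *)
From mathcomp Require Import all_boot.
Set Implicit Arguments. Unset Strict Implicit. Unset Printing Implicit Defensive.

(* c_p(w): number of occurrences of p as a subsequence of w, i.e. number of
   index sets i_1 < ... < i_l with w_{i_1}...w_{i_l} = p.  An index set is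
   encoded by its characteristic bit mask m of length |w|, and the selected
   subword is [mask m w]. *)
Definition occ (p w : seq bool) : nat :=
  #|[set m : (size w).-tuple bool | mask m w == p]|.

Definition runs (p : seq bool) : nat :=
  match p with
  | [::] => 0
  | x :: s => (count id (pairmap (fun a b => a != b) x s)).+1
  end.

Definition Bnp (n : nat) (p : seq bool) (k : nat) : nat :=
  #|[set w : n.-tuple bool | occ p w == k]|.

(* Main.v *)
Require Import Defs.
From mathcomp Require Import all_boot zify.

Fixpoint allw (n : nat) : seq (seq bool) :=
  if n is n'.+1 then map (cons true) (allw n') ++ map (cons false) (allw n')
  else [:: [::]].

Lemma allw_uniq n : uniq (allw n).
Proof.
elim: n => [//|n IH] /=.
rewrite cat_uniq !map_inj_uniq //; try by move=> a b [].
rewrite IH /= andbT; apply/hasPn => x /mapP [y _ ->].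
by apply/mapP => [[z _]].
Qed.

Lemma cons_inj (b : bool) : injective (cons b).
Proof. by move=> x y []. Qed.

Lemma mem_allw n s : (s \in allw n) = (size s == n).
Proof.
elim: n s => [|n IH] s; first by case: s.
case: s => [|c s] /=; first by rewrite mem_cat; apply/norP; split; apply/mapP => [[z _]].
rewrite mem_cat; case: c.
- rewrite (mem_map (@cons_inj true)) IH.
  by apply/orb_idr => /mapP [z _].
- rewrite (mem_map (@cons_inj false)) IH.
  by apply/orb_idl => /mapP [z _].
Qed.

Lemma card_allw n (P : pred (seq bool)) :
  #|[set m : n.-tuple bool | P m]| = count P (allw n).
Proof.
rewrite -sum1_card.
rewrite (eq_bigl (fun m : n.-tuple bool => P m)); last by move=> m; rewrite inE.
rewrite sum1_count -(count_map val P).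
apply/permP: P; apply: uniq_perm.
- by rewrite map_inj_uniq ?index_enum_uniq //; apply: val_inj.
- exact: allw_uniq.
move=> s; rewrite mem_allw; apply/mapP/idP.
- by move=> [t _ ->]; rewrite size_tuple.
- move=> /eqP H; exists (Tuple (introT eqP H)) => //; exact: mem_index_enum.
Qed.

Fixpoint occr (p w : seq bool) : nat :=
  match p, w with
  | [::], _ => 1
  | _ :: _, [::] => 0
  | x :: p', y :: w' => (x == y) * occr p' w' + occr p w'
  end.

Lemma occE p w : occ p w = occr p w.
Proof.
rewrite /occ (card_allw (size w) (fun m => mask m w == p)).
elim: w p => [|y w IH] [|x p] //=.
- rewrite count_cat !count_map.
  rewrite (eq_count (a2 := pred0)) ?count_pred0 //.
  by rewrite (IH [::]) add0n; case: w {IH}.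
- rewrite count_cat !count_map -IH -IH; congr (_ + _).
  rewrite (eq_count (a2 := fun m => (x == y) && (mask m w == p))); last first.
    by move=> m /=; rewrite eqseq_cons eq_sym.
  by case: (x == y); rewrite ?mul1n ?mul0n // count_pred0.
Qed.

Lemma occr_nilp w : occr [::] w = 1. Proof. by case: w. Qed.

Lemma occr_nil x q : occr (x :: q) [::] = 0. Proof. by []. Qed.
Lemma occr_cons x q y w : occr (x :: q) (y :: w) = (x == y) * occr q w + occr (x :: q) w.
Proof. by []. Qed.

Lemma occr_mono q y w : occr q w <= occr q (y :: w).
Proof. case: q => [|x q]. by case: w. rewrite occr_cons; exact: leq_addl. Qed.

Lemma occr_sub x q w : 0 < occr (x :: q) w -> 0 < occr q w.
Proof.
elim: w => [//|y w IH]; rewrite occr_cons.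
case: (x == y); rewrite ?mul1n ?mul0n ?add0n.
- case: (posnP (occr q w)) => H.
  + rewrite H add0n => /IH; by rewrite H.
  + by move=> _; apply: leq_trans H (occr_mono _ _ _).
- by move=> /IH H; apply: leq_trans H (occr_mono _ _ _).
Qed.

Lemma occr_same x q w : occr (x :: q) w = 1 -> occr (x :: x :: q) w = 0.
Proof.
elim: w => [//|y w IH]; rewrite !occr_cons.
case: (boolP (x == y)) => Hxy; rewrite ?Hxy ?(negbTE Hxy) ?mul1n ?mul0n ?add0n.
- move=> H.
  have H1 : occr (x :: q) w = 0.
    case: (posnP (occr (x :: q) w)) => // Hp.
    have := @occr_sub _ _ _ Hp; lia.
  rewrite H1 add0n.
  case: (posnP (occr (x :: x :: q) w)) => // Hp.
  have := @occr_sub _ _ _ Hp; lia.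
- by move=> /IH ->.
Qed.

Definition F n p := count (fun w => occr p w == 1) (allw n).
Definition K n x q := count (fun w => (occr q w == 1) && (occr (x :: q) w == 0)) (allw n).

Lemma F0 x q : F 0 (x :: q) = 0. Proof. by []. Qed.

Lemma FS n x q : F n.+1 (x :: q) = K n x q + F n (x :: q).
Proof.
rewrite /F /K /= count_cat !count_map.
have E : forall w, (occr q w + occr (x :: q) w == 1) =
                   (occr q w == 1) && (occr (x :: q) w == 0).
  move=> w; case: (posnP (occr (x :: q) w)) => H.
  - by rewrite H addn0 andbT.
  - have := @occr_sub _ _ _ H => H2.
    rewrite andbF; apply/eqP; lia.
case: x E => E.
- congr (_ + _); apply: eq_count => w /=; rewrite mul1n; exact: E.
- rewrite [LHS]addnC; f_equal; apply: eq_count => w /=; rewrite ?mul1n ?mul0n //; exact: E.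
Qed.

Lemma Knil n x : K n x [::] = 1.
Proof.
rewrite /K; elim: n => [|n IH] /=; first by case: x.
rewrite count_cat !count_map.
case: x IH => IH /=.
- rewrite (eq_count (a1 := preim (cons true) _) (a2 := pred0)) ?count_pred0 ?add0n;
    last by move=> w /=; rewrite occr_nilp.
  by rewrite -[RHS]IH; apply: eq_count => w /=; rewrite occr_nilp.
- rewrite (eq_count (a1 := preim (cons false) _) (a2 := pred0)) ?count_pred0 ?addn0;
    last by move=> w /=; rewrite occr_nilp.
  by rewrite -[RHS]IH; apply: eq_count => w /=; rewrite occr_nilp.
Qed.

Lemma Ksame n x q : K n x (x :: q) = F n (x :: q).
Proof.
rewrite /K /F; apply: eq_count => w /=.
case: eqP => // /occr_same ->; by [].
Qed.

Lemma K0 x y q : K 0 x (y :: q) = 0. Proof. by []. Qed.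

Lemma Kdiff n x q : K n.+1 x (~~ x :: q) = K n (~~ x) q.
Proof.
rewrite /K /= count_cat !count_map.
have Ebad : forall w, (occr (~~ x :: q) (x :: w) == 1) &&
    (occr (x :: ~~ x :: q) (x :: w) == 0) = false.
  move=> w; rewrite !occr_cons eqxx mul1n.
  rewrite (_ : (~~ x == x) = false) ?mul0n ?add0n; last by case: (x).
  apply/negbTE; apply/andP => [[/eqP ? /eqP ?]]; lia.
have Egood : forall w, (occr (~~ x :: q) (~~ x :: w) == 1) &&
    (occr (x :: ~~ x :: q) (~~ x :: w) == 0) =
    (occr q w == 1) && (occr (~~ x :: q) w == 0).
  move=> w; rewrite !occr_cons eqxx mul1n.
  rewrite (_ : (x == ~~ x) = false) ?mul0n ?add0n; last by case: (x).
  have h1 := @occr_sub x (~~ x :: q) w. have h2 := @occr_sub (~~ x) q w.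
  apply/andP/andP => [[/eqP ? /eqP ?]|[/eqP ? /eqP ?]]; split; apply/eqP; lia.
case: x Ebad Egood => Ebad Egood /=.
- rewrite (eq_count (a1 := preim (cons true) _) (a2 := pred0)) ?count_pred0 ?add0n;
    last by move=> w; exact: Ebad.
  by apply: eq_count => w; exact: Egood.
- rewrite (eq_count (a1 := preim (cons false) _) (a2 := pred0)) ?count_pred0 ?addn0;
    last by move=> w; exact: Ebad.
  by apply: eq_count => w; exact: Egood.
Qed.

Lemma runs_cons2 x y q : runs [:: x, y & q] = (x != y) + runs (y :: q).
Proof. by rewrite /= addnS. Qed.

Lemma runs_le x q : runs (x :: q) <= (size q).+1.
Proof.
elim: q x => [//|y q IH] x; rewrite runs_cons2 /=.
have := IH y; case: (x != y) => /=; lia.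
Qed.

Lemma runs_pos x q : 0 < runs (x :: q). Proof. by []. Qed.

Definition FF n x q := 'C(n.+1 - runs (x :: q), (size q).+2 - runs (x :: q)).
Definition KK n x q := if runs (x :: q) <= n.+1
  then 'C(n.+1 - runs (x :: q), (size q).+1 - runs (x :: q)) else 0.

Lemma arith0 r l : 0 < r -> r <= l.+1 -> 'C(1 - r, l.+2 - r) = 0.
Proof.
move=> hp hr; rewrite (_ : 1 - r = 0); last lia.
by rewrite (_ : l.+2 - r = (l.+1 - r).+1) ?bin0n; last lia.
Qed.

Lemma arithS r l n : 0 < r -> r <= l.+1 ->
  'C(n.+2 - r, l.+2 - r) =
  (if r <= n.+1 then 'C(n.+1 - r, l.+1 - r) else 0) + 'C(n.+1 - r, l.+2 - r).
Proof.
move=> hp hr; case: leqP => h.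
- rewrite (_ : n.+2 - r = (n.+1 - r).+1); last lia.
  rewrite (_ : l.+2 - r = (l.+1 - r).+1); last lia.
  by rewrite binS addnC.
- rewrite (_ : n.+2 - r = 0); last lia.
  rewrite (_ : n.+1 - r = 0); last lia.
  by rewrite (_ : l.+2 - r = (l.+1 - r).+1) ?bin0n; last lia.
Qed.

Lemma F_of_K x q : (forall n, K n x q = KK n x q) -> forall n, F n (x :: q) = FF n x q.
Proof.
move=> HK; have hr := runs_le x q; have hp := runs_pos x q.
elim=> [|n IH]; first by rewrite F0 /FF arith0.
by rewrite FS IH HK /KK /FF arithS.
Qed.

Lemma main_ind q : forall x, (forall n, K n x q = KK n x q) /\ (forall n, F n (x :: q) = FF n x q).
Proof.
elim: q => [|y q IH] x.
  have HK : forall n, K n x [::] = KK n x [::].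
    by move=> n; rewrite Knil /KK /= bin0.
  by split => //; apply: F_of_K.
suff HK : forall n, K n x (y :: q) = KK n x (y :: q) by split => //; apply: F_of_K.
case: (IH y) => IHK IHF.
have hr := runs_le y q.
case: (eqVneq y x) => [Eyx|Nyx] n.
- subst y; rewrite Ksame IHF /FF /KK.
  have -> : runs [:: x, x & q] = runs (x :: q) by rewrite runs_cons2 eqxx.
  move: hr; generalize (runs (x :: q)) => r hr.
  case: leqP => h //.
  rewrite (_ : n.+1 - r = 0); last lia.
  by rewrite (_ : (size q).+2 - r = ((size q).+1 - r).+1) ?bin0n; last lia.
- have Ey : y = ~~ x by move: Nyx; case: (x); case: (y).
  subst y.
  have hrr : runs [:: x, ~~ x & q] = (runs (~~ x :: q)).+1
    by rewrite runs_cons2; case: (x).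
  case: n => [|n].
    by rewrite K0 /KK hrr; case: leqP => //; have := runs_pos (~~ x) q; lia.
  rewrite Kdiff IHK /KK hrr /=.
  rewrite (_ : (runs (~~ x :: q)).+1 <= n.+2 = (runs (~~ x :: q) <= n.+1)) //.
Qed.

Theorem mainTheorem2 (p : seq bool) (n : nat) :
  1 <= size p ->
  Bnp n p 1 = 'C(n + 1 - runs p, size p + 1 - runs p).
Proof.
case: p => [//|x q] _.
rewrite /Bnp (card_allw n (fun w => occ (x :: q) w == 1)).
rewrite (eq_count (a2 := fun w => occr (x :: q) w == 1)); last by move=> w /=; rewrite occE.
case: (main_ind q x) => _ H; rewrite /F in H; rewrite H.
by rewrite /FF /= !addn1.
Qed.
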